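(* Let $\lambda\in[0,1]$. For every $\alpha$ with $1\le\alpha<\frac{2(1-\lambda)}{2\lambda+1}$, there exists an instance with the weighted single metric loss with parameter $\lambda$ in which no clustering is in the $\alpha$-core.
   Context: Instance: finite nonempty set $\mathcal{N}$ of $n$ agents, finite nonempty set $\mathcal{M}$ of feasible centers, positive integer $k$, pseudometric $d$ on $\mathcal{N}\cup\mathcal{M}$. Weighted single metric loss: $\ell_i(C,x)=\lambda\max_{j\in C}d(i,j)+(1-\lambda)d(i,x)$ for $i\in C\subseteq\mathcal{N}$, $x\in\mathcal{M}$. A clustering is $\mathcal{X}=\{(C_1,x_1),\dots,(C_k,x_k)\}$ with $C_t$ pairwise disjoint (some possibly empty), union $\mathcal{N}$, $x_t\in\mathcal{M}$; $\ell_i(\mathcal{X})=\ell_i(C_t,x_t)$ where $i\in C_t$. For $\alpha\ge1$, $\mathcal{X}$ is in the $\alpha$-core if there is no $S\subseteq\mathcal{N}$ with $|S|\ge n/k$ and $y\in\mathcal{M}$ with $\alpha\,\ell_i(S,y)<\ell_i(\mathcal{X})$ for all $i\in S$. *)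

(* Defs.v *)
From HB Require Import structures.
From mathcomp Require Import all_boot all_order all_algebra.
Set Implicit Arguments. Unset Strict Implicit. Unset Printing Implicit Defensive.
Import Order.TTheory GRing.Theory Num.Theory.
Local Open Scope ring_scope.

Definition pseudometric (R : realDomainType) (T : Type) (d : T -> T -> R) : Prop :=
  (forall x, d x x = 0) /\
  (forall x y, 0 <= d x y) /\
  (forall x y, d x y = d y x) /\
  (forall x y z, d x z <= d x y + d y z).

(* Weighted single metric loss  l_i(C,x) = lam * max_{j in C} d(i,j) + (1-lam) d(i,x).
   (The max is taken with default 0; since d >= 0 and i \in C this is the true max.) *)
Definition wloss (R : realDomainType) (N M : finType) (d : N + M -> N + M -> R)
  (lam : R) (C : {set N}) (x : M) (i : N) : R :=
  lam * (\big[Num.max/0]_(j in C) d (inl i) (inl j)) + (1 - lam) * d (inl i) (inr x).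

(* A clustering with k (possibly empty) clusters: agent i is in cluster a i,
   cluster t is C_t = [set j | a j == t] with center x t. *)
Definition cluster (N : finType) (k : nat) (a : N -> 'I_k) (t : 'I_k) : {set N} :=
  [set j | a j == t].

Definition closs (R : realDomainType) (N M : finType) (d : N + M -> N + M -> R)
  (lam : R) (k : nat) (a : N -> 'I_k) (x : 'I_k -> M) (i : N) : R :=
  wloss d lam (cluster a (a i)) (x (a i)) i.

Definition in_core (R : realFieldType) (N M : finType) (d : N + M -> N + M -> R)
  (lam alpha : R) (k : nat) (a : N -> 'I_k) (x : 'I_k -> M) : Prop :=
  ~ exists (S : {set N}) (y : M),
      ((#|N|%:R / k%:R : R) <= #|S|%:R) /\
      (forall i, i \in S -> alpha * wloss d lam S y i < closs d lam a x i).

(* Main.v *)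
Require Import Defs.
From HB Require Import structures.
From mathcomp Require Import all_boot all_order all_algebra.
From mathcomp Require Import zify ring lra.
Import Order.TTheory GRing.Theory Num.Theory.

Set Implicit Arguments. Unset Strict Implicit. Unset Printing Implicit Defensive.

(* Two far-apart groups (g : bool) of three agents and three centers each. *)
Notation P3 := (bool * 'I_3)%type.

Definition code (z : P3 + P3) : nat :=
  match z with
  | inl (g, i) => (i + 3 * g)%N
  | inr (g, j) => (6 + j + 3 * g)%N
  end.

Definition fdist (k : nat) : nat :=
  match k with 0 => 1 | 1 => 2 | _ => 4 end%N.

Definition dnat (u v : nat) : nat :=
  if u == v then 0%N else
  if (u %% 6) %/ 3 != (v %% 6) %/ 3 then 8%N else
  if u %/ 6 == v %/ 6 then 3%N else
  if u %/ 6 == 0%N then fdist ((u %% 3 + 3 - v %% 3) %% 3)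
  else fdist ((v %% 3 + 3 - u %% 3) %% 3).

Local Open Scope ring_scope.

Definition dd (R : realFieldType) (x y : P3 + P3) : R := (dnat (code x) (code y))%:R.

Lemma code_lt (z : P3 + P3) : (code z < 12)%N.
Proof. case: z => [[g i]|[g i]] /=; have := ltn_ord i; case: g => /=; lia. Qed.

Lemma tri_all : all (fun a => all (fun b => all (fun c =>
   (dnat a c <= dnat a b + dnat b c)%N) (iota 0 12)) (iota 0 12)) (iota 0 12).
Proof. exact: (erefl true). Qed.

Lemma sym_all : all (fun a => all (fun b =>
   (dnat a b == dnat b a)) (iota 0 12)) (iota 0 12).
Proof. exact: (erefl true). Qed.

Lemma dd_pseudo (R : realFieldType) : pseudometric (@dd R).
Proof.
split; [|split; [|split]].
- by move=> x; rewrite /dd /dnat eqxx.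
- by move=> x y; rewrite /dd ler0n.
- move=> x y; rewrite /dd; congr (_%:R).
  have := allP sym_all (code x); rewrite mem_iota add0n code_lt => /(_ isT).
  by move/allP/(_ (code y)); rewrite mem_iota add0n code_lt => /(_ isT) /eqP.
- move=> x y z; rewrite /dd -natrD ler_nat.
  have := allP tri_all (code x); rewrite mem_iota add0n code_lt => /(_ isT).
  move/allP/(_ (code y)); rewrite mem_iota add0n code_lt => /(_ isT).
  by move/allP/(_ (code z)); rewrite mem_iota add0n code_lt => /(_ isT).
Qed.

Lemma F1 (g : bool) (j : 'I_3) (m : P3) : (m.1 = g -> m.2 = j) ->
  (2 <= dnat (code (inl (g, ordS j))) (code (inr m)))%N.
Proof.
case: m => mg mj /=; case: g; case: mg; case: j => [[|[|[|//]]] ?];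
  case: mj => [[|[|[|//]]] ?] //= H; by have := H erefl.
Qed.

Lemma F2 (g : bool) (j : 'I_3) (m : P3) : (m.1 = g -> m.2 = j) ->
  (4 <= dnat (code (inl (g, ordS (ordS j)))) (code (inr m)))%N.
Proof.
case: m => mg mj /=; case: g; case: mg; case: j => [[|[|[|//]]] ?];
  case: mj => [[|[|[|//]]] ?] //= H; by have := H erefl.
Qed.

Lemma F3 (g : bool) (j : 'I_3) :
  dnat (code (inl (g, ordS j))) (code (inr (g, ordS j))) = 1%N.
Proof. by case: g; case: j => [[|[|[|//]]] ?]. Qed.

Lemma F4 (g : bool) (j : 'I_3) :
  dnat (code (inl (g, ordS (ordS j)))) (code (inr (g, ordS j))) = 2%N.
Proof. by case: g; case: j => [[|[|[|//]]] ?]. Qed.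

Lemma F5 (g : bool) (i j : 'I_3) :
  (dnat (code (inl (g, i))) (code (inl (g, j))) <= 3)%N.
Proof. by case: g; case: i => [[|[|[|//]]] ?]; case: j => [[|[|[|//]]] ?]. Qed.

Lemma F6 (j : 'I_3) : ordS j != ordS (ordS j).
Proof. by case: j => [[|[|[|//]]] ?]. Qed.

Lemma no4 (u v w z : 'I_3) : u != v -> u != w -> u != z -> v != w -> v != z -> w != z -> False.
Proof.
rewrite -!val_eqE /=; have := ltn_ord u; have := ltn_ord v; have := ltn_ord w;
have := ltn_ord z; lia.
Qed.

Lemma good_of (g : bool) (c : P3 -> P3) :
  (forall p q : P3, p.1 = g -> q.1 = g -> (c p).1 = g -> (c q).1 = g -> c p = c q) ->
  exists j : 'I_3, forall i : P3, i.1 = g -> (c i).1 = g -> (c i).2 = j.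
Proof.
move=> H; case: (pickP (fun i : P3 => (i.1 == g) && ((c i).1 == g))) => [i0 /andP[/eqP h1 /eqP h2] | none].
- by exists (c i0).2 => i hi hci; rewrite (H i i0).
- exists ord0 => i /eqP hi /eqP hci; by have := none i; rewrite hi hci.
Qed.

Lemma key (a : P3 -> 'I_3) (x : 'I_3 -> P3) :
  exists g : bool, exists j : 'I_3,
    forall i : P3, i.1 = g -> (x (a i)).1 = g -> (x (a i)).2 = j.
Proof.
set c := fun i => x (a i).
case: (boolP [forall p : P3, forall q : P3,
   [==> p.1 == false, q.1 == false, (c p).1 == false, (c q).1 == false => c p == c q]]).
- move=> /forallP H; exists false; apply: good_of => p q h1 h2 h3 h4.
  have /forallP/(_ q) := H p; rewrite h1 h2 h3 h4 /= => /eqP; exact.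
- move=> /forallPn [p /forallPn [q]].
  case: (p.1 =P false) => h1 //; case: (q.1 =P false) => h2 //;
  case: ((c p).1 =P false) => h3 //; case: ((c q).1 =P false) => h4 // /= hpq.
  exists true; apply: good_of => p' q' h1' h2' h3' h4'.
  apply/eqP; apply/negPn/negP => hne.
  have ne1 : forall u v, c u != c v -> a u != a v.
    by move=> u v; apply: contra => /eqP e; rewrite /c e.
  have ne2 : forall u v, (c u).1 != (c v).1 -> a u != a v.
    by move=> u v; apply: contra => /eqP e; rewrite /c e.
  apply: (@no4 (a p) (a q) (a p') (a q')).
  + exact: ne1.
  + by apply: ne2; rewrite h3 h3'.
  + by apply: ne2; rewrite h3 h4'.
  + by apply: ne2; rewrite h4 h3'.
  + by apply: ne2; rewrite h4 h4'.
  + exact: ne1.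
Qed.

Lemma bound (R : realFieldType) (lam alpha : R) (S : {set P3}) (y i : P3)
  (a : P3 -> 'I_3) (x : 'I_3 -> P3) (D0 Dc : nat) :
  0 <= lam -> lam <= 1 -> 1 <= alpha ->
  (forall j, j \in S -> (dnat (code (inl i)) (code (inl j)) <= 3)%N) ->
  dnat (code (inl i)) (code (inr y)) = D0 ->
  (Dc <= dnat (code (inl i)) (code (inr (x (a i)))))%N ->
  alpha * (3 * lam + (1 - lam) * D0%:R) < (1 - lam) * Dc%:R ->
  alpha * wloss (@dd R) lam S y i < closs (@dd R) lam a x i.
Proof.
move=> l0 l1 a1 HS HD0 HDc H.
rewrite /closs /wloss /dd HD0.
set m1 := (\big[Num.max/0]_(j in S) _).
set m2 := (\big[Num.max/0]_(j in _) _).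
have hm1 : m1 <= 3.
  rewrite /m1; apply: (big_ind (fun v : R => v <= 3)) => //.
  - by move=> u v hu hv; rewrite ge_max hu hv.
  - by move=> j hj; have := HS j hj; rewrite -(ler_nat R) => h; apply: le_trans h _.
have hm2 : 0 <= m2.
  rewrite /m2; apply: (big_ind (fun v : R => 0 <= v)) => //.
  by move=> u v hu hv; rewrite le_max hu.
have hDc : Dc%:R <= (dnat (code (inl i)) (code (inr (x (a i)))))%:R :> R by rewrite ler_nat.
have h1 : 0 <= 1 - lam by lra.
have e1 : alpha * (lam * m1 + (1 - lam) * D0%:R) <= alpha * (3 * lam + (1 - lam) * D0%:R).
  apply: ler_wpM2l; first lra.
  rewrite lerD2r mulrC; apply: ler_wpM2r => //.
have e2 : 0 <= lam * m2 by apply: mulr_ge0.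
have e3 : (1 - lam) * Dc%:R <= (1 - lam) * (dnat (code (inl i)) (code (inr (x (a i)))))%:R.
  by apply: ler_wpM2l.
lra.
Qed.

Theorem mainTheorem10 (R : realFieldType) (lam : R) :
  0 <= lam <= 1 ->
  forall alpha : R, 1 <= alpha -> alpha < 2 * (1 - lam) / (2 * lam + 1) ->
  exists (N M : finType) (k : nat) (d : N + M -> N + M -> R),
    [/\ (0 < #|N|)%N, (0 < #|M|)%N, (0 < k)%N, pseudometric d &
      forall (a : N -> 'I_k) (x : 'I_k -> M), ~ in_core d lam alpha a x].
Proof.
move=> /andP[l0 l1] alpha a1 ha.
have h2 : 0 < 2 * lam + 1 by lra.
have hb : alpha * (2 * lam + 1) < 2 * (1 - lam) by rewrite -ltr_pdivlMr.
have hal : 0 <= alpha * lam by apply: mulr_ge0 => //; lra.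
exists P3, P3, 3%N, (@dd R); split.
- by rewrite card_prod card_bool card_ord.
- by rewrite card_prod card_bool card_ord.
- by [].
- exact: dd_pseudo.
move=> a x; rewrite /in_core => H; apply: H.
have [g [j Hj]] := key a x.
exists [set (g, ordS j); (g, ordS (ordS j))], (g, ordS j); split.
- rewrite cards2 xpair_eqE eqxx /= F6 card_prod card_bool card_ord.
  by rewrite ler_pdivrMr ?ltr0n // -natrM ler_nat.
have HS : forall i0 j0, j0 \in [set (g, ordS j); (g, ordS (ordS j))] ->
    (dnat (code (inl (g, i0))) (code (inl j0)) <= 3)%N.
  by move=> i0 j0 /set2P[->|->]; apply: F5.
move=> i /set2P[->|->].
- apply: (@bound R lam alpha _ _ _ a x 1%N 2%N) => //.
  + exact: HS.
  + exact: F3.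
  + exact: (F1 (Hj (g, ordS j) erefl)).
  + lra.
- apply: (@bound R lam alpha _ _ _ a x 2%N 4%N) => //.
  + exact: HS.
  + exact: F4.
  + exact: (F2 (Hj (g, ordS (ordS j)) erefl)).
  + lra.
Qed.
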